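(* Let $L$ be a finite-dimensional semisimple Leibniz algebra over $\mathbb{C}$, written as $L=(\oplus_{i=1}^m\mathfrak{g}_i)\ltimes(\oplus_{k=1}^n I_k)$, where $\mathfrak{g}_1,\dots,\mathfrak{g}_m$ are simple Lie subalgebras whose direct sum is a subalgebra of $L$ complementary to $I$ and isomorphic to the liezation $\mathfrak{g}_L$, and $I=\oplus_{k=1}^n I_k$ is a decomposition of $I$ into simple $(\oplus_{i=1}^m\mathfrak{g}_i)$-submodules (with respect to the right action $i.g=[i,g]$). Then for all $1\le i\le m$ and $1\le k\le n$, either $[I_k,\mathfrak{g}_i]=I_k$ or $[I_k,\mathfrak{g}_i]=\{0\}$.
   Context: A Leibniz algebra is a vector space $L$ with a bilinear bracket satisfying $[[x,y],z]=[[x,z],y]+[x,[y,z]]$ for all $x,y,z\in L$. The subspace $I=\mathrm{Span}\langle [x,x]\mid x\in L\rangle$ is an ideal with $[L,I]=0$; the quotient $\mathfrak{g}_L=L/I$ is a Lie algebra (the liezation). $L$ is semisimple if $\mathfrak{g}_L$ is a semisimple Lie algebra. In that case $L$ contains a subalgebra isomorphic to $\mathfrak{g}_L$ complementary to $I$, so $L$ admits a decomposition as in the claim; $[I_k,\mathfrak{g}_i]$ denotes the span of brackets $[x,y]$ with $x\in I_k$, $y\in\mathfrak{g}_i$. *)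

(* Defs.v *)
From HB Require Import structures.
From mathcomp Require Import all_boot all_order all_algebra.
From mathcomp Require Import complex.
From mathcomp Require Import reals.
Set Implicit Arguments. Unset Strict Implicit. Unset Printing Implicit Defensive.
Import Order.TTheory GRing.Theory Num.Theory.
Local Open Scope ring_scope.

Section LeibnizDefs.
Variables (K : fieldType) (V : vectType K).

Definition spanned_by (P : V -> Prop) (U : {vspace V}) : Prop :=
  (forall v, P v -> v \in U) /\
  (forall W : {vspace V}, (forall v, P v -> v \in W) -> (U <= W)%VS).

Definition bilinear_br (br : V -> V -> V) : Prop :=
  (forall (a : K) x y z, br (a *: x + y) z = a *: br x z + br y z) /\
  (forall (a : K) x y z, br x (a *: y + z) = a *: br x y + br x z).

Definition leibniz_identity (br : V -> V -> V) : Prop :=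
  forall x y z, br (br x y) z = br (br x z) y + br x (br y z).

Definition brackets (br : V -> V -> V) (A B : {vspace V}) : V -> Prop :=
  fun v => exists x y, [/\ x \in A, y \in B & v = br x y].

Definition brsp_is (br : V -> V -> V) (A B U : {vspace V}) : Prop :=
  spanned_by (brackets br A B) U.

Definition subalgebra (br : V -> V -> V) (A : {vspace V}) : Prop :=
  forall x y, x \in A -> y \in A -> br x y \in A.

Definition simple_lie_subalgebra (br : V -> V -> V) (A : {vspace V}) : Prop :=
  [/\ subalgebra br A,
      (forall x, x \in A -> br x x = 0),
      (exists x y, [/\ x \in A, y \in A & br x y != 0]) &
      (forall J : {vspace V}, (J <= A)%VS ->
         (forall x y, x \in J -> y \in A -> br x y \in J /\ br y x \in J) ->
         J = 0%VS \/ J = A)].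

Definition right_submodule (br : V -> V -> V) (G M : {vspace V}) : Prop :=
  forall x y, x \in M -> y \in G -> br x y \in M.

Definition simple_right_module (br : V -> V -> V) (G M : {vspace V}) : Prop :=
  [/\ right_submodule br G M, M != 0%VS &
      forall U : {vspace V}, (U <= M)%VS -> right_submodule br G U ->
        U = 0%VS \/ U = M].

End LeibnizDefs.

(* Main.v *)
Require Import Defs.
From HB Require Import structures.
From mathcomp Require Import all_boot all_order all_algebra.
From mathcomp Require Import complex.
From mathcomp Require Import reals.
From Stdlib Require Import Classical.
Import Order.TTheory GRing.Theory Num.Theory.
Local Open Scope ring_scope.

Section Helpers.
Variables (K : fieldType) (V : vectType K).

Lemma span_exists (P : V -> Prop) : exists U : {vspace V}, spanned_by P U.
Proof.
suff H : forall d (U : {vspace V}), (\dim U <= d)%N -> (forall v, P v -> v \in U) ->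
  exists U, spanned_by P U.
  by apply: (H (\dim (fullv : {vspace V}))) => //; move=> v _; exact: memvf.
elim=> [|d IH] U hd hU.
  exists U; split => // W _.
  have /eqP -> : U == 0%VS by rewrite -dimv_eq0 -leqn0.
  exact: sub0v.
case: (classic (forall W : {vspace V}, (forall v, P v -> v \in W) -> (U <= W)%VS)) => Hc.
  by exists U.
have [W HW] := not_all_ex_not _ _ Hc.
have [hW hUW] := imply_to_and _ _ HW.
apply: (IH (U :&: W)%VS); last first.
  by move=> v pv; apply/memv_capP; split; [exact: hU|exact: hW].
have := ltn_leqif (dimv_leqif_sup (capvSl U W)).
have -> : (U <= U :&: W)%VS = false.
  apply/negP => h; apply: hUW; exact: subv_trans h (capvSr U W).
move=> /= h; rewrite -ltnS; exact: leq_trans (h : (_ < _)%N) hd.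
Qed.

Lemma preim_exists (f : V -> V) (Hf : linear f) (W : {vspace V}) :
  exists P : {vspace V}, forall v, (v \in P) = (f v \in W).
Proof.
pose flM := GRing.isLinear.Build _ _ _ _ f Hf.
pose fL : {linear _ -> _} := HB.pack f flM.
exists (linfun fL @^-1: W)%VS => v.
by rewrite -memv_preim lfunE.
Qed.

End Helpers.

Theorem proposition3p1 (R : realType) (V : vectType R[i]) (br : V -> V -> V)
  (m n : nat) (g : 'I_m -> {vspace V}) (Ik : 'I_n -> {vspace V}) :
  bilinear_br br -> leibniz_identity br ->
  (* I = Span <[x,x]> equals I_1 (+) ... (+) I_n *)
  spanned_by (fun v => exists x, v = br x x) (\sum_(k < n) Ik k)%VS ->
  directv (\sum_(k < n) Ik k)%VS ->
  (* g_1, ..., g_m simple Lie subalgebras, forming a direct sum of Lie algebras *)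
  (forall i, simple_lie_subalgebra br (g i)) ->
  directv (\sum_(i < m) g i)%VS ->
  (forall i j x y, i != j -> x \in g i -> y \in g j -> br x y = 0) ->
  (* the direct sum is a subalgebra complementary to I *)
  subalgebra br (\sum_(i < m) g i)%VS ->
  ((\sum_(i < m) g i) + (\sum_(k < n) Ik k))%VS = fullv ->
  directv ((\sum_(i < m) g i) + (\sum_(k < n) Ik k))%VS ->
  (* each I_k is a simple module for the right action of the sum of the g_i *)
  (forall k, simple_right_module br (\sum_(i < m) g i)%VS (Ik k)) ->
  forall (i : 'I_m) (k : 'I_n),
    brsp_is br (Ik k) (g i) (Ik k) \/ brsp_is br (Ik k) (g i) 0%VS.
Proof.
move=> [Hl Hr] Hleib _ _ Hsimp _ Horth _ _ _ Hmod i k.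
have linL : forall z, linear (fun x => br x z) by move=> z a x y; exact: Hl.
have linR : forall y, linear (br y) by move=> y a x z; exact: Hr.
set G := (\sum_(i < m) g i)%VS.
have step1 : forall y z, y \in g i -> z \in G -> br y z \in g i.
  move=> y z hy hz.
  have [P HP] := @preim_exists _ _ (br y) (linR y) (g i).
  suff /subvP sGP : (G <= P)%VS by rewrite -HP; exact: sGP.
  apply/subv_sumP => j _; apply/subvP => v hv; rewrite HP.
  case: (eqVneq i j) => [eij|nij]; first subst j.
    by case: (Hsimp i) => Hs _ _ _; exact: Hs.
  by rewrite (Horth i j y v nij hy hv) mem0v.
have giG : (g i <= G)%VS by exact: (sumv_sup i).
have [HmodS HmodN HmodM] := Hmod k.
have [U [HU1 HU2]] := @span_exists _ _ (brackets br (Ik k) (g i)).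
have UI : (U <= Ik k)%VS.
  apply: HU2 => v [x [y [hx hy ->]]].
  by apply: HmodS => //; exact: (subvP giG).
have Usub : right_submodule br G U.
  move=> u z hu hz.
  have [P HP] := @preim_exists _ _ (fun x => br x z) (linL z) U.
  suff /subvP sUP : (U <= P)%VS by rewrite -HP; exact: sUP.
  apply: HU2 => v [x [y [hx hy ->]]]; rewrite HP Hleib.
  apply: memvD; apply: HU1.
    by exists (br x z), y; split => //; exact: HmodS.
  by exists x, (br y z); split => //; exact: step1.
have HS : spanned_by (brackets br (Ik k) (g i)) U by split.
case: (HmodM U UI Usub) => EU; [right|left]; move: HS; by rewrite EU.
Qed.
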